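(* Let $\ell\ge1$ and $\kappa\ge1$ be integers. For each integer $1\le \nu\le \kappa$ and $u>1$, \[ \widetilde{K}_{\ell}^{(\nu)}(u,\kappa)=(\kappa)_{\nu}\,\widetilde{K}_{\ell}(u,\kappa-\nu)+\sum_{j=0}^{\nu-1}\sum_{m=0}^{\ell}\sum_{r=0}^{\ell-m}\frac{(-1)^{r}\Gamma(\kappa+1)}{m!\,(\ell-m-r)!}E_{\kappa-j,m}C_{r,0}\left(\log^{\ell-m-r}u\right)^{(\nu-j)}, \] where all derivatives are with respect to $u$.
   Context: For integers $\ell\ge1$, $\kappa\ge0$ and $u>1$, define \[ \widetilde{K}_{\ell}(u,\kappa):=\sum_{m=0}^{\ell}\sum_{n=m}^{\kappa}\sum_{r=0}^{\ell-m}\frac{(-1)^{r}\Gamma(\kappa+1)}{m!\,(\ell-m-r)!}E_{n,m}C_{r,\kappa-n}u^{\kappa-n}\log^{\ell-m-r}u, \] where the sum over $n$ is empty if $m>\kappa$; the constants $C_{r,\kappa}$ ($r,\kappa\ge0$) are defined by $\sum_{r\ge0}C_{r,\kappa}z^r=e^{\gamma z}/\Gamma(\kappa+1-z)$ with $\gamma$ Euler's constant; the constants $E_{n,m}$ ($n,m\ge0$) are defined by $\sum_{n\ge0}E_{n,m}z^n=\left(\int_0^z\frac{1-e^{-t}}{t}\,dt\right)^m$. $\widetilde{K}_{\ell}^{(\nu)}$ denotes the $\nu$-th derivative in $u$, $\left(\log^{k}u\right)^{(i)}$ denotes the $i$-th derivative in $u$ of $(\log u)^k$, and $(x)_{n}:=x(x-1)\cdots(x-n+1)$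 is the falling factorial. *)

(* Defs.v *)
From Stdlib Require Import Reals List Factorial.
From Coquelicot Require Import Coquelicot.
Open Scope R_scope.

(* sumR a b f = f a + f (a+1) + ... + f b ; empty (= 0) if a > b. *)
Definition sumR (a b : nat) (f : nat -> R) : R :=
  fold_right Rplus 0 (map f (seq a (S b - a))).

Definition EulerGamma : R :=
  real (Lim_seq (fun n => sumR 1 n (fun i => / INR i) - ln (INR n))).

Definition Gamma (x : R) : R :=
  RInt_gen (fun t => Rpower t (x - 1) * exp (- t))
           (at_right 0) (Rbar_locally p_infty).

Fixpoint falling (x : R) (n : nat) : R :=
  match n with
  | O => 1
  | S n' => falling x n' * (x - INR n')
  end.

Definition Ein (z : R) : R :=
  RInt (fun t => if Req_EM_T t 0 then 1 else (1 - exp (- t)) / t) 0 z.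

Definition Ecoef (n m : nat) : R :=
  Derive_n (fun z => Ein z ^ m) n 0 / INR (fact n).

Definition Ccoef (r kappa : nat) : R :=
  Derive_n (fun z => exp (EulerGamma * z) / Gamma (INR kappa + 1 - z)) r 0
  / INR (fact r).

Definition Ktilde (l : nat) (u : R) (kappa : nat) : R :=
  sumR 0 l (fun m =>
  sumR m kappa (fun n =>
  sumR 0 (l - m) (fun r =>
    (-1) ^ r * Gamma (INR kappa + 1) / (INR (fact m) * INR (fact (l - m - r)))
    * Ecoef n m * Ccoef r (kappa - n) * u ^ (kappa - n) * ln u ^ (l - m - r)))).

(* Main.v *)
Require Import Defs.
From Stdlib Require Import Reals List Factorial Lia Lra FunctionalExtensionality.
From Coquelicot Require Import Coquelicot.
Open Scope R_scope.

Definition Dn (U : R -> Prop) (n : nat) (f : R -> R) :=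
  forall x, U x -> forall j, (j <= n)%nat -> ex_derive_n f j x.

Lemma Dn_loc U n f x : open U -> Dn U n f -> U x ->
  locally x (fun y => forall k, (k <= n)%nat -> ex_derive_n f k y).
Proof.
  intros HU H Hx. destruct (HU x Hx) as [e He]. exists e. intros y Hy k Hk.
  apply H; auto.
Qed.

Lemma Dn_mono U n m f : (m <= n)%nat -> Dn U n f -> Dn U m f.
Proof. intros Hmn H x Hx j Hj. apply H; auto; lia. Qed.

Lemma Dn_ext U n f g : open U -> (forall x, U x -> f x = g x) -> Dn U n f -> Dn U n g.
Proof.
  intros HU Hfg H x Hx j Hj. apply ex_derive_n_ext_loc with f.
  - destruct (HU x Hx) as [e He]. exists e. intros y Hy. apply Hfg, He, Hy.
  - apply H; auto.
Qed.

Lemma ex_derive_n_SS h j x :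
  ex_derive_n h (S (S j)) x <-> ex_derive_n (Derive h) (S j) x.
Proof.
  assert (E : forall t, Derive_n (Derive h) j t = Derive_n h (S j) t).
  { intro t. rewrite <- Nat.add_1_r. rewrite <- (Derive_n_comp h j 1).
    apply Derive_n_ext. intro; reflexivity. }
  
  change (ex_derive (Derive_n h (S j)) x <-> ex_derive (Derive_n (Derive h) j) x).
  
  split; apply ex_derive_ext; intro t; rewrite E; reflexivity.
Qed.

Lemma ex_derive_n_1 h x : ex_derive_n h 1 x <-> ex_derive h x.
Proof. unfold ex_derive_n. unfold Derive_n. split; intro H; exact H. Qed.

Lemma Dn_S U n h : Dn U (S n) h <-> (forall x, U x -> ex_derive h x) /\ Dn U n (Derive h).
Proof.
  split.
  - intros H. split.
    + intros x Hx. apply (proj1 (ex_derive_n_1 h x)). apply H; auto; lia.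
    + intros x Hx j Hj. destruct j as [|j]. exact I.
      apply (proj1 (ex_derive_n_SS h j x)). apply H; auto; lia.
  - intros [H1 H2] x Hx j Hj. destruct j as [|j]. exact I.
    destruct j as [|j]. apply (proj2 (ex_derive_n_1 h x)). apply H1, Hx.
    apply (proj2 (ex_derive_n_SS h j x)). apply H2; auto; lia.
Qed.

Lemma Dn_plus U n f g : open U -> Dn U n f -> Dn U n g -> Dn U n (fun x => f x + g x).
Proof.
  intros HU Hf Hg x Hx j Hj. apply ex_derive_n_plus.
  - apply Dn_loc with U; auto. apply Dn_mono with n; auto.
  - apply Dn_loc with U; auto. apply Dn_mono with n; auto.
Qed.

Lemma Dn_scal U n a f : Dn U n f -> Dn U n (fun x => a * f x).
Proof. intros Hf x Hx j Hj. apply ex_derive_n_scal_l. auto. Qed.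

Lemma Dn_const U n a : Dn U n (fun _ => a).
Proof. intros x Hx j Hj. destruct j. exact I. apply ex_derive_n_const. Qed.

Lemma Dn_mult U n : open U -> forall f g, Dn U n f -> Dn U n g -> Dn U n (fun x => f x * g x).
Proof.
  intros HU. induction n as [|n IH]; intros f g Hf Hg.
  - intros x Hx j Hj. replace j with 0%nat by lia. exact I.
  - apply Dn_S in Hf as [Hf1 Hf2]. apply Dn_S in Hg as [Hg1 Hg2].
    assert (Hf0 : Dn U n f) by (apply Dn_mono with (S n); [lia|apply Dn_S; auto]).
    assert (Hg0 : Dn U n g) by (apply Dn_mono with (S n); [lia|apply Dn_S; auto]).
    apply Dn_S. split.
    + intros x Hx. apply ex_derive_mult; auto.
    + apply Dn_ext with (fun x => Derive f x * g x + f x * Derive g x); auto.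
      * intros x Hx. rewrite Derive_mult; auto.
      * apply Dn_plus; auto.
Qed.

Lemma Dn_inv U n : open U -> forall f, Dn U n f -> (forall x, U x -> f x <> 0) ->
  Dn U n (fun x => / f x).
Proof.
  intros HU. induction n as [|n IH]; intros f Hf Hnz.
  - intros x Hx j Hj. replace j with 0%nat by lia. exact I.
  - assert (Hf0 : Dn U n f) by (apply Dn_mono with (S n); auto).
    apply Dn_S in Hf as [Hf1 Hf2].
    apply Dn_S. split.
    + intros x Hx. apply ex_derive_inv; auto.
    + apply Dn_ext with (fun x => (-1 * Derive f x) * ((/ f x) * (/ f x))); auto.
      * intros x Hx. rewrite Derive_inv; auto. specialize (Hnz x Hx). field. auto.
      * apply Dn_mult; auto. apply Dn_scal; auto. apply Dn_mult; auto.
Qed.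

Lemma Dn_exp_lin U n c : Dn U n (fun z => exp (c * z)).
Proof.
  revert c; induction n as [|n IH]; intros c.
  - intros x Hx j Hj. replace j with 0%nat by lia. exact I.
  - intros x Hx j Hj. 
    assert (E : forall k y, Derive_n (fun z => exp (c * z)) k y = c ^ k * exp (c * y)).
    { induction k as [|k IHk]; intros y. simpl. ring.
      simpl. rewrite (Derive_ext _ (fun y => c ^ k * exp (c * y))) by (intro; apply IHk).
      apply is_derive_unique. auto_derive. auto. ring. }
    destruct j. exact I. simpl. apply ex_derive_ext with (fun y => c ^ j * exp (c * y)).
    intro; rewrite E; auto. auto_derive. auto.
Qed.

Definition psi (c t : R) := Rpower t (c - 1) / (1 + Rpower t c) ^ 2.
Definition Gc (c t : R) := Rpower t c / (c * (1 + Rpower t c)).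

Lemma Rpower_pos t c : 0 < Rpower t c.
Proof. unfold Rpower. apply exp_pos. Qed.

Lemma Rpower_minus1 t c : 0 < t -> Rpower t (c - 1) = Rpower t c / t.
Proof.
  intros Ht. unfold Rpower. replace ((c - 1) * ln t) with (c * ln t + - ln t) by ring.
  rewrite exp_plus, exp_Ropp, exp_ln by auto. reflexivity.
Qed.

Lemma Gc_derive c t : 0 < c -> 0 < t -> is_derive (Gc c) t (psi c t).
Proof.
  intros Hc Ht. unfold Gc, psi. rewrite Rpower_minus1 by auto.
  unfold Rpower. auto_derive.
  - repeat split; auto. 
    apply Rgt_not_eq. apply Rmult_lt_0_compat; auto. pose proof (exp_pos (c * ln t)); lra.
  - pose proof (exp_pos (c * ln t)). field. split; lra.
Qed.

Lemma psi_cont c t : 0 < t -> continuous (psi c) t.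
Proof.
  intros Ht. apply (ex_derive_continuous (psi c)). unfold psi, Rpower. auto_derive.
  repeat split; auto. pose proof (exp_pos (c * ln t)). apply Rgt_not_eq. apply Rmult_lt_0_compat; lra.
Qed.

Lemma psi_pos c t : 0 < psi c t.
Proof.
  unfold psi. pose proof (Rpower_pos t (c-1)). pose proof (Rpower_pos t c).
  apply Rdiv_lt_0_compat; auto. apply pow_lt. lra.
Qed.

Lemma RInt_psi K c a b : 0 < c -> 0 < a -> 0 < b ->
  is_RInt (fun t => K * psi c t) a b (K * (Gc c b - Gc c a)).
Proof.
  intros Hc Ha Hb.
  assert (E : K * (Gc c b - Gc c a) = minus (K * Gc c b) (K * Gc c a)).
  { unfold minus, plus, opp; simpl. ring. }
  rewrite E.
  apply (is_RInt_derive (fun t => K * Gc c t) (fun t => K * psi c t)).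
  - intros x Hx. assert (0 < x). { apply Rlt_le_trans with (Rmin a b); [|apply Hx]. apply Rmin_glb_lt; auto. }
    apply (is_derive_scal (Gc c) x K). apply Gc_derive; auto.
  - intros x Hx. assert (0 < x). { apply Rlt_le_trans with (Rmin a b); [|apply Hx]. apply Rmin_glb_lt; auto. }
    apply (continuous_scal_r K (psi c)). apply psi_cont; auto.
Qed.

Lemma RInt_dom_le (f : R -> R) K c a b : 0 < c -> 0 < a -> a <= b ->
  (forall t, 0 < t -> continuous f t) ->
  (forall t, 0 < t -> Rabs (f t) <= K * psi c t) ->
  Rabs (RInt f a b) <= K * (Gc c b - Gc c a).
Proof.
  intros Hc Ha Hab Hf Hd.
  assert (Hpos : forall x, Rmin a b <= x <= Rmax a b -> 0 < x).
  { intros x Hx. apply Rlt_le_trans with (Rmin a b); [|apply Hx]. apply Rmin_glb_lt; lra. }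
  assert (Exf : ex_RInt f a b). { apply (ex_RInt_continuous (V:=R_CompleteNormedModule)). intros z Hz. apply Hf, Hpos, Hz. }
  eapply Rle_trans. apply abs_RInt_le; auto.
  rewrite <- (is_RInt_unique _ _ _ _ (RInt_psi K c a b Hc Ha ltac:(lra))).
  apply RInt_le; auto.
  - apply (ex_RInt_continuous (V:=R_CompleteNormedModule)). intros z Hz. apply continuous_Rabs_comp. apply Hf, Hpos, Hz.
  - eexists. apply RInt_psi; lra.
  - intros x Hx. apply Hd. lra.
Qed.

Lemma RInt_dom (f : R -> R) K c a b : 0 < c -> 0 < a -> 0 < b ->
  (forall t, 0 < t -> continuous f t) ->
  (forall t, 0 < t -> Rabs (f t) <= K * psi c t) ->
  Rabs (RInt f a b) <= K * Rabs (Gc c b - Gc c a).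
Proof.
  intros Hc Ha Hb Hf Hd.
  assert (HK : 0 <= K).
  { specialize (Hd 1 ltac:(lra)). pose proof (Rabs_pos (f 1)). pose proof (psi_pos c 1).
    destruct (Rle_or_lt 0 K); auto. nra. }
  destruct (Rle_or_lt a b) as [Hab|Hab].
  - apply Rle_trans with (K * (Gc c b - Gc c a)). apply RInt_dom_le; auto.
    apply Rmult_le_compat_l; auto. apply Rle_abs.
  - assert (Exf : ex_RInt f b a).
    { apply (ex_RInt_continuous (V:=R_CompleteNormedModule)). intros z Hz. apply Hf. apply Rlt_le_trans with (Rmin b a); [|apply Hz]. apply Rmin_glb_lt; lra. }
    rewrite <- (opp_RInt_swap f b a Exf). 
    change (Rabs (- RInt f b a) <= K * Rabs (Gc c b - Gc c a)). rewrite Rabs_Ropp.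
    apply Rle_trans with (K * (Gc c a - Gc c b)). apply RInt_dom_le; auto. lra. apply Rmult_le_compat_l; auto.
    rewrite <- Rabs_Ropp. replace (- (Gc c b - Gc c a)) with (Gc c a - Gc c b) by ring. apply Rle_abs.
Qed.

Lemma Gc_bounds c t : 0 < c -> 0 < t -> 0 < Gc c t < 1 / c.
Proof.
  intros Hc Ht. unfold Gc. pose proof (Rpower_pos t c). split.
  - apply Rdiv_lt_0_compat; auto. apply Rmult_lt_0_compat; lra.
  - apply Rmult_lt_reg_r with (c * (1 + Rpower t c)). apply Rmult_lt_0_compat; lra.
    field_simplify; try lra. 
Qed.

Lemma Gc_small c eta : 0 < c -> 0 < eta -> exists d, 0 < d /\ forall t, 0 < t < d -> Gc c t < eta.
Proof.
  intros Hc He. exists (exp (ln (eta * c) / c)). split. apply exp_pos.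
  intros t [Ht1 Ht2]. unfold Gc.
  assert (H1 : Rpower t c < eta * c).
  { unfold Rpower. rewrite <- (exp_ln (eta * c)) by (apply Rmult_lt_0_compat; auto).
    apply exp_increasing. apply ln_increasing in Ht2; auto. rewrite ln_exp in Ht2.
    apply Rmult_lt_reg_r with (/ c). apply Rinv_0_lt_compat; auto.
    replace (c * ln t * / c) with (ln t) by (field; lra). exact Ht2. }
  pose proof (Rpower_pos t c).
  apply Rle_lt_trans with (Rpower t c / c).
  - unfold Rdiv. apply Rmult_le_compat_l; [lra|]. apply Rinv_le_contravar. lra. nra.
  - apply Rmult_lt_reg_r with c; auto. field_simplify; lra.
Qed.

Lemma Gc_large c eta : 0 < c -> 0 < eta -> exists M, 0 < M /\ forall t, M < t -> 1 / c - Gc c t < eta.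
Proof.
  intros Hc He. exists (exp (ln (/ (eta * c)) / c)). split. apply exp_pos.
  intros t Ht. assert (Ht0 : 0 < t) by (pose proof (exp_pos (ln (/ (eta * c)) / c)); lra).
  assert (H1 : / (eta * c) < Rpower t c).
  { unfold Rpower. rewrite <- (exp_ln (/ (eta * c))) by (apply Rinv_0_lt_compat, Rmult_lt_0_compat; auto).
    apply exp_increasing. apply ln_increasing in Ht; [|apply exp_pos]. rewrite ln_exp in Ht.
    apply Rmult_lt_reg_r with (/ c). apply Rinv_0_lt_compat; auto.
    replace (c * ln t * / c) with (ln t) by (field; lra). exact Ht. }
  pose proof (Rpower_pos t c). unfold Gc.
  replace (1 / c - Rpower t c / (c * (1 + Rpower t c))) with (/ (c * (1 + Rpower t c))) by (field; lra).
  apply Rlt_trans with (/ (c * Rpower t c)).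
  - apply Rinv_lt_contravar. apply Rmult_lt_0_compat; nra. apply Rmult_lt_compat_l; lra.
  - rewrite <- (Rinv_inv eta). apply Rinv_lt_contravar. apply Rmult_lt_0_compat. apply Rinv_0_lt_compat; auto. nra.
    apply Rmult_lt_reg_r with (/ c). apply Rinv_0_lt_compat; auto.
    replace (c * Rpower t c * / c) with (Rpower t c) by (field; lra).
    replace (/ eta * / c) with (/ (eta * c)) by (field; lra). auto.
Qed.

Definition FF := filter_prod (at_right 0) (Rbar_locally p_infty).

Lemma FF_pos : FF (fun ab : R * R => 0 < fst ab /\ 0 < snd ab).
Proof.
  apply (Filter_prod _ _ _ (fun a => 0 < a) (fun b => 0 < b)).
  - exists (mkposreal 1 Rlt_0_1). intros y _ Hy. exact Hy.
  - exists 0. intros; auto.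
  - intros; simpl; auto.
Qed.

Lemma ball_R (x e y : R) : ball x e y <-> Rabs (y - x) < e.
Proof. reflexivity. Qed.

Lemma gen_dom (f : R -> R) K c : 0 < c ->
  (forall t, 0 < t -> continuous f t) ->
  (forall t, 0 < t -> Rabs (f t) <= K * psi c t) ->
  exists l, is_RInt_gen f (at_right 0) (Rbar_locally p_infty) l /\ Rabs l <= K / c.
Proof.
  intros Hc Hf Hd.
  assert (HK : 0 <= K).
  { specialize (Hd 1 ltac:(lra)). pose proof (Rabs_pos (f 1)). pose proof (psi_pos c 1).
    destruct (Rle_or_lt 0 K); auto. nra. }
  set (u := fun ab : R * R => RInt f (fst ab) (snd ab)).
  assert (Hex : forall a b, 0 < a -> 0 < b -> ex_RInt f a b).
  { intros a b Ha Hb. apply (ex_RInt_continuous (V:=R_CompleteNormedModule)). intros z Hz. apply Hf.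
    apply Rlt_le_trans with (Rmin a b); [|apply Hz]. apply Rmin_glb_lt; auto. }
  assert (HPF : ProperFilter FF).
  { unfold FF. apply filter_prod_proper. }
  set (Fm := filtermap u FF).
  assert (HPm : ProperFilter Fm) by (apply filtermap_proper_filter; auto).
  assert (Hcau : cauchy Fm).
  { intros eps. set (eta := eps / (2 * (K + 1))).
    assert (Heta : 0 < eta) by (unfold eta; apply Rdiv_lt_0_compat; [apply cond_pos|lra]).
    destruct (Gc_small c eta Hc Heta) as [d [Hd0 Hds]].
    destruct (Gc_large c eta Hc Heta) as [M [HM0 HMl]].
    exists (u (d / 2, M + 1)). unfold Fm, filtermap.
    apply (Filter_prod _ _ _ (fun a => 0 < a < d) (fun b => M < b)).
    - exists (mkposreal d Hd0). intros y Hy Hy0. split; auto.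
      apply ball_R in Hy. apply Rabs_def2 in Hy. unfold minus, plus, opp in Hy; simpl in Hy. lra.
    - exists M. auto.
    - intros a b [Ha1 Ha2] Hb. apply ball_R. unfold u; simpl.
      assert (E : RInt f a b = RInt f a (d/2) + RInt f (d/2) (M+1) + RInt f (M+1) b).
      { rewrite <- (RInt_Chasles f a (d/2) b) by (apply Hex; lra).
        rewrite <- (RInt_Chasles f (d/2) (M+1) b) by (apply Hex; lra).
        unfold plus; simpl. ring. }
      rewrite E. replace (RInt f a (d / 2) + RInt f (d / 2) (M + 1) + RInt f (M + 1) b - RInt f (d / 2) (M + 1))
        with (RInt f a (d / 2) + RInt f (M + 1) b) by ring.
      eapply Rle_lt_trans. apply Rabs_triang.
      pose proof (RInt_dom f K c a (d/2) Hc Ha1 ltac:(lra) Hf Hd).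
      pose proof (RInt_dom f K c (M+1) b Hc ltac:(lra) ltac:(lra) Hf Hd).
      assert (A1 : Rabs (Gc c (d/2) - Gc c a) <= eta).
      { pose proof (Hds a ltac:(lra)). pose proof (Hds (d/2) ltac:(lra)).
        pose proof (Gc_bounds c a Hc Ha1). pose proof (Gc_bounds c (d/2) Hc ltac:(lra)).
        apply Rabs_le. lra. }
      assert (A2 : Rabs (Gc c b - Gc c (M+1)) <= eta).
      { pose proof (HMl b Hb). pose proof (HMl (M+1) ltac:(lra)).
        pose proof (Gc_bounds c b Hc ltac:(lra)). pose proof (Gc_bounds c (M+1) Hc ltac:(lra)).
        apply Rabs_le. lra. }
      assert (K * eta + K * eta < eps).
      { unfold eta. pose proof (cond_pos eps). apply Rmult_lt_reg_r with (K + 1). lra.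
        field_simplify; nra. }
      pose proof (Rmult_le_compat_l K _ _ HK A1). pose proof (Rmult_le_compat_l K _ _ HK A2). lra. }
  set (l := lim Fm).
  assert (Hlim : filterlim u FF (locally l)).
  { intros P [e He]. unfold filtermap. apply (filter_imp (fun ab => ball l e (u ab))).
    intros ab H. apply He, H. apply (complete_cauchy Fm HPm Hcau e). }
  exists l. split.
  - apply (filterlimi_lim_ext_loc u). 
    + apply (filter_imp (fun ab : R * R => 0 < fst ab /\ 0 < snd ab)); [|apply FF_pos].
      intros [a b] [Ha Hb]. unfold u; simpl in *. apply (RInt_correct (V:=R_CompleteNormedModule)). apply Hex; auto.
    + exact Hlim.
  - assert (Hle := filterlim_le (F:=FF) (fun ab => Rabs (u ab)) (fun _ => K / c) (Rabs l) (K / c)).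
    simpl in Hle. apply Hle.
    + apply (filter_imp (fun ab : R * R => 0 < fst ab /\ 0 < snd ab)); [|apply FF_pos].
      intros [a b] [Ha Hb]. unfold u; simpl in *.
      apply Rle_trans with (K * Rabs (Gc c b - Gc c a)). apply RInt_dom; auto.
      pose proof (Gc_bounds c a Hc Ha). pose proof (Gc_bounds c b Hc Hb).
      replace (K / c) with (K * (1 / c)) by (field; lra). apply Rmult_le_compat_l; auto. apply Rabs_le. lra.
    + apply filterlim_comp with (locally l); auto. apply continuous_Rabs.
    + apply filterlim_const.
Qed.

Lemma exp_le_mono x y : x <= y -> exp x <= exp y.
Proof. intros H. destruct (Rle_lt_or_eq _ _ H) as [H1|H1]. left; apply exp_increasing; auto. rewrite H1; lra. Qed.

Lemma ln_le_sub1 y : 0 < y -> ln y <= y - 1.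
Proof. intros Hy. pose proof (exp_ineq1_le (ln y)). rewrite exp_ln in H; auto. lra. Qed.

Lemma Rpower_exp_bound g t : 0 < g -> 0 < t -> Rpower t g * exp (- t) <= Rpower g g.
Proof.
  intros Hg Ht. unfold Rpower. rewrite <- exp_plus. apply exp_le_mono.
  pose proof (ln_le_sub1 (t / g) ltac:(apply Rdiv_lt_0_compat; auto)).
  unfold Rdiv in H. rewrite ln_mult, ln_Rinv in H; auto; [|apply Rinv_0_lt_compat; auto].
  apply Rmult_le_compat_l with (r := g) in H; [|lra].
  replace (g * (t * / g - 1)) with (t - g) in H by (field; lra). nra.
Qed.

Lemma Rpower_le1 t p : 0 < t <= 1 -> 0 <= p -> Rpower t p <= 1.
Proof.
  intros [Ht1 Ht2] Hp. unfold Rpower. rewrite <- exp_0. apply exp_le_mono.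
  assert (ln t <= 0). { rewrite <- ln_1. destruct (Rle_lt_or_eq _ _ Ht2) as [H|H]. left; apply ln_increasing; auto. rewrite H; lra. }
  nra.
Qed.

Lemma Rpower_ge1 t p : 1 <= t -> 0 <= p -> 1 <= Rpower t p.
Proof.
  intros Ht Hp. unfold Rpower. rewrite <- exp_0. apply exp_le_mono.
  assert (0 <= ln t). { rewrite <- ln_1. destruct (Rle_lt_or_eq _ _ Ht) as [H|H]. left; apply ln_increasing; auto; lra. rewrite H; lra. }
  nra.
Qed.

Lemma abs_ln_small t e : 0 < t <= 1 -> 0 < e -> Rabs (ln t) <= Rpower t (- e) / e.
Proof.
  intros [Ht1 Ht2] He.
  assert (ln t <= 0). { rewrite <- ln_1. destruct (Rle_lt_or_eq _ _ Ht2) as [H|H]. left; apply ln_increasing; auto. rewrite H; lra. }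
  rewrite Rabs_left1 by auto.
  pose proof (ln_le_sub1 (Rpower t (- e)) (Rpower_pos _ _)).
  unfold Rpower in H0 at 1. rewrite ln_exp in H0.
  apply Rmult_le_reg_r with e; auto. unfold Rdiv. rewrite Rmult_assoc, Rinv_l by lra. nra.
Qed.

Lemma abs_ln_large t : 1 <= t -> Rabs (ln t) <= t.
Proof.
  intros Ht. assert (0 <= ln t). { rewrite <- ln_1. destruct (Rle_lt_or_eq _ _ Ht) as [H|H]. left; apply ln_increasing; auto; lra. rewrite H; lra. }
  rewrite Rabs_right by lra. pose proof (ln_le_sub1 t ltac:(lra)). lra.
Qed.

Lemma Rpower_nat t m : 0 < t -> t ^ m = Rpower t (INR m).
Proof. intros; rewrite Rpower_pow; auto. Qed.

Lemma Rpower_powR t y m : (Rpower t y) ^ m = Rpower t (y * INR m).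
Proof.
  induction m as [|m IH]. simpl. unfold Rpower. rewrite Rmult_0_r, Rmult_0_l, exp_0. reflexivity.
  rewrite S_INR. simpl. rewrite IH. rewrite <- Rpower_plus. f_equal. ring.
Qed.

Lemma dom_basic b m c : 0 < c < b + 1 ->
  exists K, forall t, 0 < t -> Rpower t b * Rabs (ln t) ^ m * exp (- t) <= K * psi c t.
Proof.
  intros [Hc Hcb]. set (a := b + 1 - c). assert (Ha : 0 < a) by (unfold a; lra).
  pose proof (pos_INR m) as Hm.
  set (e := a / (INR m + 1)). assert (He : 0 < e) by (unfold e; apply Rdiv_lt_0_compat; auto; lra).
  set (g := a + INR m + 2 * c). assert (Hg : 0 < g) by (unfold g; lra).
  exists (4 * (/ e) ^ m + 4 * Rpower g g). intros t Ht.
  assert (Hb : Rpower t b = Rpower t (c - 1) * Rpower t a).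
  { rewrite <- Rpower_plus. f_equal. unfold a; ring. }
  set (L := Rabs (ln t) ^ m). set (E := exp (- t)). set (P := Rpower t c).
  assert (HL : 0 <= L) by (apply pow_le, Rabs_pos).
  assert (HE : 0 < E) by apply exp_pos.
  assert (HP : 0 < P) by apply Rpower_pos.
  pose proof (Rpower_pos t a) as Hta. pose proof (Rpower_pos t (c-1)) as Htc.
  assert (HK1 : 0 <= (/ e) ^ m) by (apply pow_le; left; apply Rinv_0_lt_compat; auto).
  assert (HK2 : 0 < Rpower g g) by apply Rpower_pos.
  assert (X : Rpower t a * L * E * (1 + P) ^ 2 <= 4 * (/ e) ^ m + 4 * Rpower g g).
  { destruct (Rle_or_lt t 1) as [Ht1|Ht1].
    - assert (H1 : L <= (/ e) ^ m * Rpower t (- e * INR m)).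
      { unfold L. rewrite <- Rpower_powR, <- Rpow_mult_distr. apply pow_incr. split. apply Rabs_pos.
        rewrite Rmult_comm. apply abs_ln_small; auto. }
      assert (H2 : Rpower t a * Rpower t (- e * INR m) <= 1).
      { rewrite <- Rpower_plus. apply Rpower_le1. lra. unfold e.
        apply Rmult_le_reg_r with (INR m + 1). lra. field_simplify; lra. }
      assert (H3 : P <= 1) by (apply Rpower_le1; lra).
      assert (H4 : E <= 1) by (unfold E; rewrite <- exp_0; apply exp_le_mono; lra).
      assert (H5 : (1 + P) ^ 2 <= 4) by nra.
      assert (H6 : Rpower t a * L <= (/ e) ^ m).
      { apply Rle_trans with (Rpower t a * ((/ e) ^ m * Rpower t (- e * INR m))).
        apply Rmult_le_compat_l; lra. nra. }
      assert (0 <= Rpower t a * L) by nra.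
      assert (Rpower t a * L * E <= (/ e) ^ m) by nra.
      assert (0 <= Rpower t a * L * E) by nra.
      nra.
    - assert (H1 : L <= Rpower t (INR m)).
      { unfold L. rewrite <- Rpower_nat by auto. apply pow_incr. split. apply Rabs_pos. apply abs_ln_large; lra. }
      assert (H3 : 1 <= P) by (apply Rpower_ge1; lra).
      assert (H5 : (1 + P) ^ 2 <= 4 * Rpower t (2 * c)).
      { replace (2 * c) with (c + c) by ring. rewrite Rpower_plus. fold P. nra. }
      assert (H6 : Rpower t a * Rpower t (INR m) * Rpower t (2 * c) * E <= Rpower g g).
      { rewrite <- !Rpower_plus. apply Rpower_exp_bound; auto. }
      pose proof (Rpower_pos t (INR m)). pose proof (Rpower_pos t (2 * c)).
      assert (Rpower t a * L <= Rpower t a * Rpower t (INR m)) by (apply Rmult_le_compat_l; lra).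
      assert (Rpower t a * L * E * (1 + P) ^ 2 <= Rpower t a * Rpower t (INR m) * E * (4 * Rpower t (2 * c))).
      { assert (0 <= Rpower t a * L) by nra.
        apply Rmult_le_compat. nra. apply pow_le; lra. apply Rmult_le_compat_r; lra. lra. }
      nra. }
  rewrite Hb. unfold psi. fold P.
  assert (Hq : 0 < (1 + P) ^ 2) by (apply pow_lt; lra).
  apply Rmult_le_reg_r with ((1 + P) ^ 2); auto.
  replace (Rpower t (c - 1) * Rpower t a * L * E * (1 + P) ^ 2) with (Rpower t (c - 1) * (Rpower t a * L * E * (1 + P) ^ 2)) by ring.
  replace ((4 * (/ e) ^ m + 4 * Rpower g g) * (Rpower t (c - 1) / (1 + P) ^ 2) * (1 + P) ^ 2)
    with (Rpower t (c - 1) * (4 * (/ e) ^ m + 4 * Rpower g g)) by (field; lra).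
  apply Rmult_le_compat_l; lra.
Qed.

Lemma cont_pt_of_derive (f : R -> R) x : ex_derive f x -> continuity_pt f x.
Proof. intros H. apply continuity_pt_filterlim. apply (ex_derive_continuous f x H). Qed.

Lemma between_abs a x : Rmin 0 a <= x <= Rmax 0 a -> Rabs x <= Rabs a.
Proof.
  intros [H1 H2]. unfold Rmin, Rmax in *. destruct (Rle_dec 0 a).
  - rewrite !Rabs_right; lra.
  - rewrite !Rabs_left1; lra.
Qed.

Lemma exp_sub1 s : Rabs (exp s - 1) <= Rabs s * exp (Rabs s).
Proof.
  destruct (MVT_gen exp 0 s exp) as [z [Hz E]].
  - intros; apply is_derive_exp.
  - intros; apply cont_pt_of_derive. eexists; apply is_derive_exp.
  - rewrite exp_0 in E. rewrite E, Rminus_0_r, Rabs_mult, Rmult_comm.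
    rewrite (Rabs_right (exp z)) by (left; apply exp_pos).
    apply Rmult_le_compat_l. apply Rabs_pos. apply exp_le_mono.
    pose proof (between_abs s z Hz). pose proof (Rle_abs z). lra.
Qed.

Lemma exp_sub2 y : Rabs (exp y - 1 - y) <= y ^ 2 * exp (Rabs y).
Proof.
  destruct (MVT_gen (fun s => exp s - 1 - s) 0 y (fun s => exp s - 1)) as [z [Hz E]].
  - intros x _. auto_derive; auto. ring.
  - intros; apply cont_pt_of_derive. auto_derive; auto.
  - simpl in E. rewrite exp_0 in E. replace (exp y - 1 - y) with (exp y - 1 - y - (1 - 1 - 0)) by ring.
    rewrite E, Rminus_0_r, Rabs_mult.
    pose proof (between_abs y z Hz). pose proof (exp_sub1 z).
    apply Rle_trans with (Rabs z * exp (Rabs z) * Rabs y).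
    apply Rmult_le_compat_r; auto. apply Rabs_pos.
    assert (exp (Rabs z) <= exp (Rabs y)) by (apply exp_le_mono; auto).
    pose proof (Rabs_pos z). pose proof (exp_pos (Rabs z)).
    replace (y ^ 2) with (Rabs y * Rabs y) by (rewrite <- Rabs_mult; rewrite Rabs_right; [ring|nra]).
    pose proof (Rabs_pos y).
    apply Rle_trans with (Rabs y * exp (Rabs y) * Rabs y). apply Rmult_le_compat_r; auto.
    apply Rmult_le_compat; auto. nra. right; ring.
Qed.

Definition gint n x t := Rpower t (x - 1) * ln t ^ n * exp (- t).
Definition GI n x := RInt_gen (gint n x) (at_right 0) (Rbar_locally p_infty).

Lemma gint_cont n x t : 0 < t -> continuous (gint n x) t.
Proof. intros Ht. apply (ex_derive_continuous (gint n x)). unfold gint, Rpower. auto_derive. auto. Qed.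

Lemma abs_gint_gen n x y t : Rabs (Rpower t x * ln t ^ n * exp (- t) * y) =
  Rpower t x * Rabs (ln t) ^ n * exp (- t) * Rabs y.
Proof.
  rewrite !Rabs_mult, <- RPow_abs. rewrite (Rabs_right (Rpower t x)) by (left; apply Rpower_pos).
  rewrite (Rabs_right (exp (-t))) by (left; apply exp_pos). reflexivity.
Qed.

Lemma is_gen_unique (f : R -> R) l : is_RInt_gen f (at_right 0) (Rbar_locally p_infty) l ->
  RInt_gen f (at_right 0) (Rbar_locally p_infty) = l.
Proof. intros H. apply is_RInt_gen_unique; auto. Qed.

Lemma GI_is n x : 0 < x -> is_RInt_gen (gint n x) (at_right 0) (Rbar_locally p_infty) (GI n x).
Proof.
  intros Hx. destruct (dom_basic (x - 1) n (x / 2) ltac:(lra)) as [K HK].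
  destruct (gen_dom (gint n x) K (x / 2) ltac:(lra)) as [l [Hl _]].
  - intros; apply gint_cont; auto.
  - intros t Ht. unfold gint. rewrite <- (Rmult_1_r (Rpower t (x - 1) * ln t ^ n * exp (- t))).
    rewrite abs_gint_gen, Rabs_R1, Rmult_1_r. apply HK; auto.
  - unfold GI. rewrite (is_gen_unique _ l Hl). exact Hl.
Qed.

Lemma K_nonneg b m c K : (forall t, 0 < t -> Rpower t b * Rabs (ln t) ^ m * exp (- t) <= K * psi c t) -> 0 <= K.
Proof.
  intros H. 
  assert (H0 : forall t, 0 <= Rpower t b * Rabs (ln t) ^ m * exp (- t)).
  { intros t. pose proof (Rpower_pos t b). pose proof (exp_pos (- t)). pose proof (pow_le (Rabs (ln t)) m (Rabs_pos _)). 
    apply Rmult_le_pos; [apply Rmult_le_pos|]; lra. }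
  specialize (H 1 ltac:(lra)). specialize (H0 1). pose proof (psi_pos c 1).
  destruct (Rle_or_lt 0 K) as [HK|HK]; auto.
  assert (K * psi c 1 < 0). { rewrite <- (Rmult_0_l (psi c 1)). apply Rmult_lt_compat_r; auto. } lra.
Qed.

Lemma exp_abs_le d L : 0 <= d -> exp (d * Rabs L) <= exp (d * L) + exp (- d * L).
Proof.
  intros Hd. pose proof (exp_pos (d * L)). pose proof (exp_pos (- d * L)).
  destruct (Rle_or_lt 0 L).
  - rewrite Rabs_right by lra. lra.
  - rewrite Rabs_left by lra. replace (d * - L) with (- d * L) by ring. lra.
Qed.

Lemma GI_deriv n x : 0 < x -> is_derive (GI n) x (GI (S n) x).
Proof.
  intros Hx. set (d := x / 2). set (c := x / 4).
  destruct (dom_basic (x - 1 + d) (S (S n)) c ltac:(unfold c, d; lra)) as [K1 HK1].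
  destruct (dom_basic (x - 1 + - d) (S (S n)) c ltac:(unfold c, d; lra)) as [K2 HK2].
  pose proof (K_nonneg _ _ _ _ HK1). pose proof (K_nonneg _ _ _ _ HK2).
  set (M := (K1 + K2) / c). assert (HM : 0 <= M) by (unfold M, c; apply Rmult_le_pos; [lra|]; left; apply Rinv_0_lt_compat; lra).
  apply is_derive_Reals. intros eps Heps.
  assert (Hd' : 0 < Rmin d (eps / (M + 1))).
  { apply Rmin_glb_lt. unfold d; lra. apply Rdiv_lt_0_compat; lra. }
  exists (mkposreal _ Hd'). intros h Hh0 Hh. simpl in Hh.
  assert (Hhd : Rabs h < d) by (eapply Rlt_le_trans; [apply Hh|apply Rmin_l]).
  assert (Hhe : Rabs h < eps / (M + 1)) by (eapply Rlt_le_trans; [apply Hh|apply Rmin_r]).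
  assert (Hxh : 0 < x + h). { destruct (Rabs_def2 _ _ Hhd). unfold d in *. lra. }
  set (Rh := fun t => gint n (x + h) t - gint n x t - h * gint (S n) x t).
  assert (HR : is_RInt_gen Rh (at_right 0) (Rbar_locally p_infty) (GI n (x + h) - GI n x - h * GI (S n) x)).
  { apply (is_RInt_gen_minus (V:=R_NormedModule)).
    apply (is_RInt_gen_minus (V:=R_NormedModule)); apply GI_is; auto.
    apply (is_RInt_gen_scal (V:=R_NormedModule) (gint (S n) x) h). apply GI_is; auto. }
  destruct (gen_dom Rh (h ^ 2 * (K1 + K2)) c ltac:(unfold c; lra)) as [l [Hl Hlb]].
  - intros t Ht. apply (ex_derive_continuous Rh). unfold Rh, gint, Rpower. auto_derive. repeat split; auto.
  - intros t Ht. unfold Rh, gint.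
    replace (Rpower t (x + h - 1) * ln t ^ n * exp (- t) - Rpower t (x - 1) * ln t ^ n * exp (- t) -
      h * (Rpower t (x - 1) * ln t ^ S n * exp (- t)))
      with (Rpower t (x - 1) * ln t ^ n * exp (- t) * (exp (h * ln t) - 1 - h * ln t)).
    2:{ replace (x + h - 1) with ((x - 1) + h) by ring. rewrite Rpower_plus. change (ln t ^ S n) with (ln t * ln t ^ n). replace (Rpower t h) with (exp (h * ln t)) by reflexivity. ring. }
    rewrite abs_gint_gen.
    pose proof (exp_sub2 (h * ln t)) as E2.
    pose proof (exp_abs_le d (ln t) ltac:(unfold d; lra)) as E3.
    assert (E4 : exp (Rabs (h * ln t)) <= exp (d * Rabs (ln t))).
    { apply exp_le_mono. rewrite Rabs_mult. apply Rmult_le_compat_r. apply Rabs_pos. lra. }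
    specialize (HK1 t Ht). specialize (HK2 t Ht).
    rewrite Rpower_plus in HK1, HK2.
    set (A := Rpower t (x - 1) * Rabs (ln t) ^ n * exp (- t)).
    assert (HA : 0 <= A).
    { unfold A. pose proof (Rpower_pos t (x - 1)). pose proof (exp_pos (- t)). pose proof (pow_le (Rabs (ln t)) n (Rabs_pos _)).
      apply Rmult_le_pos; [apply Rmult_le_pos|]; lra. }
    assert (EE : (h * ln t) ^ 2 = h ^ 2 * Rabs (ln t) ^ 2).
    { rewrite RPow_abs. rewrite Rabs_right by (apply Rle_ge, pow2_ge_0). ring. }
    apply Rle_trans with (A * ((h * ln t) ^ 2 * (exp (d * ln t) + exp (- d * ln t)))).
    { apply Rmult_le_compat_l; auto. eapply Rle_trans. apply E2. apply Rmult_le_compat_l. apply pow2_ge_0. lra. }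
    rewrite EE.
    replace (A * (h ^ 2 * Rabs (ln t) ^ 2 * (exp (d * ln t) + exp (- d * ln t))))
      with (h ^ 2 * (Rpower t (x - 1) * Rpower t d * Rabs (ln t) ^ S (S n) * exp (- t)
             + Rpower t (x - 1) * Rpower t (- d) * Rabs (ln t) ^ S (S n) * exp (- t))).
    2:{ unfold A, Rpower. simpl. ring. }
    pose proof (pow2_ge_0 h). nra.
  - assert (El : l = GI n (x + h) - GI n x - h * GI (S n) x).
    { rewrite <- (is_gen_unique _ _ Hl). apply is_gen_unique; auto. }
    subst l.
    replace ((GI n (x + h) - GI n x) / h - GI (S n) x) with ((GI n (x + h) - GI n x - h * GI (S n) x) / h) by (field; auto).
    unfold Rdiv. rewrite Rabs_mult, Rabs_inv.
    assert (Hah : 0 < Rabs h) by (apply Rabs_pos_lt; auto).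
    apply Rmult_lt_reg_r with (Rabs h); auto. rewrite Rmult_assoc, Rinv_l by lra. rewrite Rmult_1_r.
    eapply Rle_lt_trans. apply Hlb.
    replace (h ^ 2 * (K1 + K2) / c) with (Rabs h * Rabs h * M).
    2:{ unfold M. rewrite <- Rabs_mult. rewrite Rabs_right by (apply Rle_ge; nra). field. unfold c; lra. }
    assert (Rabs h * M < eps).
    { apply Rle_lt_trans with (eps / (M + 1) * M). apply Rmult_le_compat_r; lra.
      apply Rmult_lt_reg_r with (M + 1). lra. field_simplify; nra. }
    nra.
Qed.

Lemma Gamma_GI : Gamma = GI 0.
Proof.
  apply functional_extensionality. intros x. unfold Gamma, GI. f_equal.
  apply functional_extensionality. intros t. unfold gint. simpl. ring.
Qed.

Lemma pos_open : open (fun y : R => 0 < y).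
Proof. apply open_gt. Qed.

Lemma Derive_n_GI k y : 0 < y -> Derive_n (GI 0) k y = GI k y.
Proof.
  revert y. induction k as [|k IH]; intros y Hy. reflexivity.
  simpl. rewrite (Derive_ext_loc _ (GI k)).
  - apply is_derive_unique, GI_deriv; auto.
  - destruct (pos_open y Hy) as [e He]. exists e. intros z Hz. apply IH, He, Hz.
Qed.

Lemma Dn_Gamma k : Dn (fun y => 0 < y) k Gamma.
Proof.
  rewrite Gamma_GI. intros y Hy j Hj. destruct j as [|j]. exact I.
  simpl. apply (ex_derive_ext_loc (GI j)).
  - destruct (pos_open y Hy) as [e He]. exists e. intros z Hz. symmetry. apply Derive_n_GI, He, Hz.
  - eexists. apply GI_deriv; auto.
Qed.

Lemma gen_lim (f : R -> R) l : is_RInt_gen f (at_right 0) (Rbar_locally p_infty) l ->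
  filterlim (fun ab : R * R => RInt f (fst ab) (snd ab)) FF (locally l).
Proof.
  intros H P HP. specialize (H P HP). unfold filtermapi in H. unfold filtermap, FF.
  apply (filter_imp (fun ab : R * R => exists y, is_RInt f (fst ab) (snd ab) y /\ P y)); auto.
  intros ab [y [Hy Py]]. rewrite (is_RInt_unique _ _ _ _ Hy). exact Py.
Qed.

Lemma gint_pos x t : 0 < t -> 0 < gint 0 x t.
Proof. intros Ht. unfold gint. simpl. rewrite Rmult_1_r. apply Rmult_lt_0_compat. apply Rpower_pos. apply exp_pos. Qed.

Lemma ex_RInt_gint n x a b : 0 < a -> 0 < b -> ex_RInt (gint n x) a b.
Proof.
  intros Ha Hb. apply (ex_RInt_continuous (V:=R_CompleteNormedModule)). intros z Hz. apply gint_cont.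
  apply Rlt_le_trans with (Rmin a b); [|apply Hz]. apply Rmin_glb_lt; auto.
Qed.

Lemma GI_pos x : 0 < x -> 0 < GI 0 x.
Proof.
  intros Hx. set (f := gint 0 x).
  assert (Hc0 : 0 < RInt f 1 2).
  { apply RInt_gt_0. lra. intros; apply gint_pos; lra. intros; apply gint_cont; lra. }
  assert (Hle := filterlim_le (F:=FF) (fun _ => RInt f 1 2) (fun ab : R * R => RInt f (fst ab) (snd ab)) (RInt f 1 2) (GI 0 x)).
  simpl in Hle. apply Rlt_le_trans with (RInt f 1 2); auto. apply Hle.
  - apply (Filter_prod _ _ _ (fun a => 0 < a < 1) (fun b => 2 < b)).
    + exists (mkposreal 1 Rlt_0_1). intros y Hy Hy0. split; auto.
      apply ball_R in Hy. destruct (Rabs_def2 _ _ Hy). unfold minus, plus, opp in *; simpl in *. lra.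
    + exists 2. auto.
    + intros a b [Ha1 Ha2] Hb. simpl.
      rewrite <- (RInt_Chasles f a 1 b) by (apply ex_RInt_gint; lra).
      rewrite <- (RInt_Chasles f 1 2 b) by (apply ex_RInt_gint; lra).
      assert (0 <= RInt f a 1). { apply RInt_ge_0. lra. apply ex_RInt_gint; lra. intros; left; apply gint_pos; lra. }
      assert (0 <= RInt f 2 b). { apply RInt_ge_0. lra. apply ex_RInt_gint; lra. intros; left; apply gint_pos; lra. }
      unfold plus; simpl. lra.
  - apply filterlim_const.
  - apply gen_lim. apply GI_is; auto.
Qed.

Lemma GI_rec x : 0 < x -> GI 0 (x + 1) = x * GI 0 x.
Proof.
  intros Hx.
  set (Gf := fun t => - (Rpower t x * exp (- t))).
  set (dG := fun t => - (x * Rpower t (x - 1) * exp (- t)) + Rpower t x * exp (- t)).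
  assert (HdG : forall t, 0 < t -> is_derive Gf t (dG t)).
  { intros t Ht. unfold Gf, dG. rewrite Rpower_minus1 by auto. unfold Rpower. auto_derive. auto.
    field. lra. }
  assert (Hpos : forall a b z, 0 < a -> 0 < b -> Rmin a b <= z <= Rmax a b -> 0 < z).
  { intros a b z Ha Hb Hz. apply Rlt_le_trans with (Rmin a b); [|apply Hz]. apply Rmin_glb_lt; auto. }
  assert (HI : is_RInt_gen (Derive Gf) (at_right 0) (Rbar_locally p_infty) (0 - 0)).
  { apply is_RInt_gen_Derive.
    - apply (filter_imp (fun ab : R * R => 0 < fst ab /\ 0 < snd ab)); [|apply FF_pos].
      intros [a b] [Ha Hb] z Hz. simpl in *. eexists. apply HdG. apply (Hpos a b z Ha Hb Hz).
    - apply (filter_imp (fun ab : R * R => 0 < fst ab /\ 0 < snd ab)); [|apply FF_pos].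
      intros [a b] [Ha Hb] z Hz. simpl in *. assert (Hz0 : 0 < z) by (apply (Hpos a b z Ha Hb Hz)).
      apply (continuous_ext_loc (Derive Gf) dG).
      + destruct (pos_open z Hz0) as [e He]. exists e. intros y Hy. symmetry. apply is_derive_unique, HdG, He, Hy.
      + apply (ex_derive_continuous dG). unfold dG, Rpower. auto_derive. auto.
    - apply filterlim_locally. intros eps.
      exists (mkposreal _ (exp_pos (ln eps / x))). intros t Ht Ht0. apply ball_R. simpl in Ht.
      apply ball_R in Ht. destruct (Rabs_def2 _ _ Ht). unfold minus, plus, opp in *; simpl in *.
      unfold Gf. rewrite Rminus_0_r, Rabs_Ropp, Rabs_right.
      2:{ left. apply Rmult_lt_0_compat. apply Rpower_pos. apply exp_pos. }
      apply Rle_lt_trans with (Rpower t x).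
      { rewrite <- (Rmult_1_r (Rpower t x)) at 2. apply Rmult_le_compat_l. left; apply Rpower_pos.
        rewrite <- exp_0. apply exp_le_mono. lra. }
      unfold Rpower. rewrite <- (exp_ln eps) by apply cond_pos. apply exp_increasing.
      rewrite Ropp_0, Rplus_0_r in H.
      apply ln_increasing in H; auto. rewrite ln_exp in H.
      apply Rmult_lt_reg_r with (/ x). apply Rinv_0_lt_compat; auto.
      replace (x * ln t * / x) with (ln t) by (field; lra). exact H.
    - apply filterlim_locally. intros eps. simpl.
      set (B := Rpower (x + 1) (x + 1)). assert (HB : 0 < B) by apply Rpower_pos.
      exists (B / eps + 1). intros t Ht. apply ball_R.
      assert (Ht0 : 0 < t). { assert (0 < B / eps) by (apply Rdiv_lt_0_compat; [auto|apply cond_pos]). lra. }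
      unfold Gf. rewrite Rminus_0_r, Rabs_Ropp, Rabs_right.
      2:{ left. apply Rmult_lt_0_compat. apply Rpower_pos. apply exp_pos. }
      replace x with (x + 1 - 1) at 1 by ring. rewrite Rpower_minus1 by auto.
      pose proof (Rpower_exp_bound (x + 1) t ltac:(lra) Ht0). fold B in H.
      apply Rle_lt_trans with (B / t).
      { unfold Rdiv. rewrite Rmult_assoc, (Rmult_comm (/ t)), <- Rmult_assoc. apply Rmult_le_compat_r; auto.
        left; apply Rinv_0_lt_compat; auto. }
      pose proof (cond_pos eps).
      apply Rmult_lt_reg_r with (t / eps). apply Rdiv_lt_0_compat; auto.
      replace (B / t * (t / eps)) with (B / eps) by (field; lra).
      replace (eps * (t / eps)) with t by (field; lra). lra. }
  assert (H2 : is_RInt_gen (fun t => x * gint 0 x t + Derive Gf t) (at_right 0) (Rbar_locally p_infty) (x * GI 0 x + (0 - 0))).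
  { apply (is_RInt_gen_plus (V:=R_NormedModule)); auto.
    apply (is_RInt_gen_scal (V:=R_NormedModule) (gint 0 x) x). apply GI_is; auto. }
  assert (H3 : is_RInt_gen (gint 0 (x + 1)) (at_right 0) (Rbar_locally p_infty) (x * GI 0 x + (0 - 0))).
  { apply (is_RInt_gen_ext (V:=R_NormedModule) (fun t => x * gint 0 x t + Derive Gf t)); auto.
    apply (filter_imp (fun ab : R * R => 0 < fst ab /\ 0 < snd ab)); [|apply FF_pos].
    intros [a b] [Ha Hb] z Hz. simpl in *.
    assert (Hz0 : 0 < z). { apply Rlt_le_trans with (Rmin a b); [apply Rmin_glb_lt; auto|lra]. }
    rewrite (is_derive_unique _ _ _ (HdG z Hz0)). unfold gint, dG. simpl.
    replace (x + 1 - 1) with x by ring. ring. }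
  transitivity (x * GI 0 x + (0 - 0)). exact (is_gen_unique _ _ H3). change (x * GI 0 x + (0 - 0) = x * GI 0 x). ring.
Qed.

Lemma Dn_sub (U V : R -> Prop) n f : (forall z, V z -> U z) -> Dn U n f -> Dn V n f.
Proof. intros H Hf x Hx j Hj. apply Hf; auto. Qed.

Lemma lt_open a : open (fun z : R => z < a).
Proof. apply open_lt. Qed.

Lemma Dn_comp_opp a n : forall f, Dn (fun y => 0 < y) n f -> Dn (fun z => z < a) n (fun z => f (a - z)).
Proof.
  induction n as [|n IH]; intros f Hf.
  - intros x Hx j Hj. replace j with 0%nat by lia. exact I.
  - apply Dn_S in Hf as [Hf1 Hf2]. apply Dn_S. split.
    + intros z Hz. apply (ex_derive_comp f (fun z => a - z)). apply Hf1; lra. auto_derive; auto.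
    + apply Dn_ext with (fun z => -1 * Derive f (a - z)). apply lt_open.
      * intros z Hz. symmetry. apply is_derive_unique.
        apply (is_derive_comp f (fun z => a - z) z (Derive f (a - z)) (-1)).
        apply Derive_correct. apply Hf1; lra. auto_derive; auto; ring.
      * apply Dn_scal. apply IH. auto.
Qed.

Definition Gk (k : nat) (z : R) := exp (EulerGamma * z) / Gamma (INR k + 1 - z).

Lemma Gamma_pos x : 0 < x -> 0 < Gamma x.
Proof. intros; rewrite Gamma_GI; apply GI_pos; auto. Qed.

Lemma Dn_Gk k n : Dn (fun z => z < 1) n (Gk k).
Proof.
  pose proof (pos_INR k).
  apply Dn_sub with (fun z => z < INR k + 1). intros; lra.
  unfold Gk. unfold Rdiv. apply Dn_mult. apply lt_open. apply Dn_exp_lin.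
  apply Dn_inv. apply lt_open. apply Dn_comp_opp. apply Dn_Gamma.
  intros z Hz. apply Rgt_not_eq. apply Gamma_pos. lra.
Qed.

Lemma Derive_n_S' f n x : Derive_n f (S n) x = Derive_n (Derive f) n x.
Proof.
  rewrite <- Nat.add_1_r, <- (Derive_n_comp f n 1). apply Derive_n_ext. intro; reflexivity.
Qed.

Lemma Derive_n_lin U a G : open U -> (forall n, Dn U n G) -> forall s z, U z ->
  Derive_n (fun y => (a - y) * G y) s z = (a - z) * Derive_n G s z - INR s * Derive_n G (pred s) z.
Proof.
  intros HU HG s. induction s as [|s IH]; intros z Hz.
  - simpl. ring.
  - simpl Derive_n at 1.
    rewrite (Derive_ext_loc _ (fun y => (a - y) * Derive_n G s y - INR s * Derive_n G (pred s) y)).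
    2:{ destruct (HU z Hz) as [e He]. exists e. intros y Hy. apply IH, He, Hy. }
    assert (E1 : ex_derive (Derive_n G s) z) by (exact (HG (S s) z Hz (S s) (le_n _))).
    assert (E2 : ex_derive (Derive_n G (pred s)) z) by (exact (HG (S (pred s)) z Hz (S (pred s)) (le_n _))).
    apply is_derive_unique.
    replace ((a - z) * Derive_n G (S s) z - INR (S s) * Derive_n G (pred (S s)) z)
      with ((-1) * Derive_n G s z + (a - z) * Derive_n G (S s) z - INR s * Derive_n G (S (pred s)) z
            + INR s * (Derive_n G (S (pred s)) z - Derive_n G s z)).
    2:{ rewrite S_INR. simpl pred. ring. }
    destruct s as [|s].
    + simpl pred. simpl INR. rewrite !Rmult_0_l, Rplus_0_r.
      apply (is_derive_minus (fun y => (a - y) * Derive_n G 0 y) (fun y => 0 * Derive_n G 0 y)).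
      * apply (is_derive_mult (fun y => a - y) (Derive_n G 0)). auto_derive; auto; ring.
        apply Derive_correct; auto. intros; apply Rmult_comm.
      * replace 0 with (0 * Derive_n G 1 z) at 1 by ring.
        apply (is_derive_scal (Derive_n G 0) z 0). apply Derive_correct; auto.
    + simpl pred. replace (Derive_n G (S s) z - Derive_n G (S s) z) with 0 by ring. rewrite Rmult_0_r, Rplus_0_r.
      apply (is_derive_minus (fun y => (a - y) * Derive_n G (S s) y) (fun y => INR (S s) * Derive_n G s y)).
      * apply (is_derive_mult (fun y => a - y) (Derive_n G (S s))). auto_derive; auto; ring.
        apply Derive_correct; auto. intros; apply Rmult_comm.
      * apply (is_derive_scal (Derive_n G s) z (INR (S s))). apply Derive_correct; auto.
Qed.

Lemma Ccoef_Gk r k : Ccoef r k = Derive_n (Gk k) r 0 / INR (fact r).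
Proof. reflexivity. Qed.

Lemma Gk_rec k y : y < 1 -> Gk k y = (INR (S k) - y) * Gk (S k) y.
Proof.
  intros Hy. unfold Gk. pose proof (pos_INR k). rewrite S_INR.
  set (x := INR k + 1 - y). assert (Hx : 0 < x) by (unfold x; lra).
  replace (INR k + 1 + 1 - y) with (x + 1) by (unfold x; ring).
  rewrite Gamma_GI, GI_rec by auto. rewrite <- Gamma_GI.
  pose proof (Gamma_pos x Hx). replace (INR k + 1 - y) with x by reflexivity. field. split; lra.
Qed.

Lemma Ccoef_rec k r : Ccoef r k = INR (S k) * Ccoef r (S k) - match r with O => 0 | S r' => Ccoef r' (S k) end.
Proof.
  rewrite !Ccoef_Gk.
  assert (E : Derive_n (Gk k) r 0 = (INR (S k) - 0) * Derive_n (Gk (S k)) r 0 - INR r * Derive_n (Gk (S k)) (pred r) 0).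
  { transitivity (Derive_n (fun y => (INR (S k) - y) * Gk (S k) y) r 0).
    - apply Derive_n_ext_loc. destruct (lt_open 1 0 ltac:(lra)) as [e He]. exists e. intros y Hy. apply Gk_rec, He, Hy.
    - apply (Derive_n_lin (fun z => z < 1) (INR (S k)) (Gk (S k)) (lt_open 1) (fun n => Dn_Gk (S k) n) r 0). lra. }
  rewrite E.
  pose proof (INR_fact_neq_0 r).
  destruct r as [|r].
  - simpl. field. 
  - rewrite Ccoef_Gk. simpl pred. pose proof (INR_fact_neq_0 r).
    replace (INR (fact (S r))) with (INR (S r) * INR (fact r)) by (rewrite <- mult_INR; reflexivity).
    field. split; auto. apply not_0_INR. lia.
Qed.

Definition ae (k : nat) : R := (-1) ^ k / INR (fact (S k)).

Lemma CV_ae : CV_radius ae = p_infty.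
Proof.
  apply CV_radius_infinite_DAlembert.
  - intros n. unfold ae. apply Rmult_integral_contrapositive. split.
    apply pow_nonzero. lra. apply Rinv_neq_0_compat, INR_fact_neq_0.
  - apply is_lim_seq_ext with (fun n => / INR (S (S n))).
    + intros n. unfold ae. pose proof (INR_fact_neq_0 (S n)).
      replace (INR (fact (S (S n)))) with (INR (S (S n)) * INR (fact (S n))) by (rewrite <- mult_INR; reflexivity).
      assert (INR (S (S n)) <> 0) by (apply not_0_INR; lia).
      replace ((-1) ^ S n / (INR (S (S n)) * INR (fact (S n))) / ((-1) ^ n / INR (fact (S n)))) with (- / INR (S (S n))).
      2:{ simpl pow. field. split; auto. split; auto. apply pow_nonzero; lra. }
      rewrite Rabs_Ropp. rewrite Rabs_right. reflexivity. left. apply Rinv_0_lt_compat. apply lt_0_INR. lia.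
    + replace (Finite 0) with (Rbar_inv p_infty) by reflexivity.
      apply (is_lim_seq_inv (fun n => INR (S (S n))) p_infty); [|discriminate].
      apply (is_lim_seq_incr_1 (fun n => INR (S n))). apply (is_lim_seq_incr_1 INR). apply is_lim_seq_INR.
Qed.

Lemma g_PSeries t : (if Req_EM_T t 0 then 1 else (1 - exp (- t)) / t) = PSeries ae t.
Proof.
  destruct (Req_EM_T t 0) as [Ht|Ht].
  - subst. rewrite PSeries_0. unfold ae. simpl. field.
  - symmetry. apply is_pseries_unique.
    pose proof (is_exp_Reals (- t)) as H.
    assert (Hm : mult (- / t) (- t) = one). { assert (E0 : - / t * - t = 1) by (field; auto). exact E0. }
    pose proof (is_pseries_decr_1 _ _ _ _ Hm H) as H2.
    unfold is_pseries in *.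
    replace ((1 - exp (- t)) / t) with (scal (- / t) (plus (exp (- t)) (opp (/ INR (fact 0))))).
    2:{ assert (E0 : (1 - exp (- t)) / t = - / t * (exp (- t) + - (/ INR (fact 0)))) by (simpl; field; auto). symmetry; exact E0. }
    revert H2. apply is_series_ext. intros n.
    assert (E1 : (- t) ^ n * / INR (fact (S n)) = t ^ n * ((-1) ^ n / INR (fact (S n)))).
    { replace (- t) with (-1 * t) by ring. rewrite Rpow_mult_distr. unfold Rdiv. ring. }
    unfold PS_decr_1, ae. rewrite !pow_n_pow. exact E1.
Qed.

Definition Hs := PSeries (PS_decr_1 (PS_Int ae)).

Lemma Ein_Hs z : Ein z = z * Hs z.
Proof.
  unfold Ein. transitivity (RInt (PSeries ae) 0 z).
  { apply RInt_ext. intros; apply g_PSeries. }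
  rewrite (RInt_PSeries ae z) by (rewrite CV_ae; exact I).
  apply PSeries_decr_1_aux. reflexivity.
Qed.

Lemma Dn_Hs n : Dn (fun _ => True) n Hs.
Proof.
  intros x _ j _. apply ex_derive_n_PSeries. unfold Hs. rewrite CV_radius_decr_1, CV_radius_Int, CV_ae. exact I.
Qed.

Lemma Dn_pow_f U n f m : open U -> Dn U n f -> Dn U n (fun z => f z ^ m).
Proof.
  intros HU Hf. induction m as [|m IH].
  - simpl. apply Dn_const.
  - apply Dn_ext with (fun z => f z * f z ^ m); auto. apply Dn_mult; auto.
Qed.

Lemma Dn_id U n : Dn U n (fun z => z).
Proof.
  intros x _ j _. apply (ex_derive_n_ext (fun z => z ^ 1)). intros; simpl; ring. apply ex_derive_n_pow.
Qed.

Lemma Derive_n_zero n : forall m Q, (forall k, Dn (fun _ => True) k Q) -> (n < m)%nat ->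
  Derive_n (fun z => z ^ m * Q z) n 0 = 0.
Proof.
  induction n as [|n IH]; intros m Q HQ Hnm.
  - simpl. destruct m as [|m]. lia. simpl. ring.
  - destruct m as [|m]. lia.
    rewrite Derive_n_S'.
    rewrite (Derive_n_ext _ (fun z => z ^ m * (INR (S m) * Q z + z * Derive Q z))).
    + apply IH; [|lia]. intros k.
      apply Dn_plus. apply open_true. apply Dn_scal; auto.
      apply Dn_mult. apply open_true. apply Dn_id.
      assert (HQ' := HQ (S k)). apply Dn_S in HQ' as [_ HQ']. exact HQ'.
    + intros t. apply is_derive_unique.
      assert (EQ : ex_derive Q t) by (apply (HQ 1%nat t I 1%nat (le_n _))).
      replace (t ^ m * (INR (S m) * Q t + t * Derive Q t)) with
        (INR (S m) * t ^ m * Q t + t ^ S m * Derive Q t) by (simpl; ring).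
      apply (is_derive_mult (fun z => z ^ S m) Q t (INR (S m) * t ^ m) (Derive Q t)).
      * auto_derive; auto. simpl. ring.
      * apply Derive_correct; auto.
      * intros; apply Rmult_comm.
Qed.

Lemma Ecoef_zero n m : (n < m)%nat -> Ecoef n m = 0.
Proof.
  intros Hnm. unfold Ecoef.
  rewrite (Derive_n_ext _ (fun z => z ^ m * Hs z ^ m)).
  - rewrite Derive_n_zero; auto. unfold Rdiv; ring.
    intros k. apply Dn_pow_f. apply open_true. apply Dn_Hs.
  - intros t. rewrite Ein_Hs. apply Rpow_mult_distr.
Qed.

Lemma fold_Rplus_acc (s : list R) x : fold_right Rplus x s = fold_right Rplus 0 s + x.
Proof. induction s as [|y s IH]; simpl. ring. rewrite IH. ring. Qed.

Lemma sumR_nil a b f : (b < a)%nat -> sumR a b f = 0.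
Proof. intros H. unfold sumR. replace (S b - a)%nat with 0%nat by lia. reflexivity. Qed.

Lemma sumR_first a b f : (a <= b)%nat -> sumR a b f = f a + sumR (S a) b f.
Proof. intros H. unfold sumR. replace (S b - a)%nat with (S (S b - S a)) by lia. reflexivity. Qed.

Lemma sumR_last a b f : (a <= S b)%nat -> sumR a (S b) f = sumR a b f + f (S b).
Proof.
  intros H. unfold sumR. replace (S (S b) - a)%nat with (S (S b - a)) by lia.
  rewrite seq_S, map_app, fold_right_app. cbn [fold_right map]. rewrite fold_Rplus_acc.
  replace (a + (S b - a))%nat with (S b) by lia. ring.
Qed.

Lemma sumR_shift a b f : sumR (S a) (S b) f = sumR a b (fun i => f (S i)).
Proof. unfold sumR. simpl minus. rewrite <- seq_shift, map_map. reflexivity. Qed.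

Lemma sumR_ext a b f g : (forall i, (a <= i <= b)%nat -> f i = g i) -> sumR a b f = sumR a b g.
Proof.
  intros H. unfold sumR. f_equal. apply map_ext_in. intros i Hi. apply in_seq in Hi. apply H. lia.
Qed.

Lemma sumR_plus a b f g : sumR a b (fun i => f i + g i) = sumR a b f + sumR a b g.
Proof. unfold sumR. induction (seq a (S b - a)) as [|x s IH]; simpl. ring. rewrite IH. ring. Qed.

Lemma sumR_scal a b c f : sumR a b (fun i => c * f i) = c * sumR a b f.
Proof. unfold sumR. induction (seq a (S b - a)) as [|x s IH]; simpl. ring. rewrite IH. ring. Qed.

Lemma sumR_zero a b f : (forall i, (a <= i <= b)%nat -> f i = 0) -> sumR a b f = 0.
Proof.
  intros H. rewrite (sumR_ext a b f (fun i => 0 * 1)). rewrite sumR_scal. ring.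
  intros; rewrite H; auto; ring.
Qed.

Definition P0 (v : R) := 0 < v.
Definition Sm (f : R -> R) := forall n, Dn P0 n f.

Lemma P0_open : open P0.
Proof. apply open_gt. Qed.

Lemma Sm_plus f g : Sm f -> Sm g -> Sm (fun v => f v + g v).
Proof. intros Hf Hg n. apply Dn_plus; auto. apply P0_open. Qed.
Lemma Sm_mult f g : Sm f -> Sm g -> Sm (fun v => f v * g v).
Proof. intros Hf Hg n. apply Dn_mult; auto. apply P0_open. Qed.
Lemma Sm_scal c f : Sm f -> Sm (fun v => c * f v).
Proof. intros Hf n. apply Dn_scal; auto. Qed.
Lemma Sm_const c : Sm (fun _ => c).
Proof. intros n. apply Dn_const. Qed.
Lemma Sm_ext f g : (forall v, 0 < v -> f v = g v) -> Sm f -> Sm g.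
Proof. intros H Hf n. apply Dn_ext with f; auto. apply P0_open. Qed.
Lemma Sm_Derive f : Sm f -> Sm (Derive f).
Proof. intros Hf n. destruct (proj1 (Dn_S P0 n f) (Hf (S n))) as [_ H]. exact H. Qed.
Lemma Sm_ex_derive f v : Sm f -> 0 < v -> ex_derive f v.
Proof. intros Hf Hv. exact (Hf 1%nat v Hv 1%nat (le_n _)). Qed.

Lemma Sm_powv k : Sm (fun v => v ^ k).
Proof. intros n x _ j _. apply ex_derive_n_pow. Qed.

Lemma ln_der x : 0 < x -> is_derive ln x (/ x).
Proof. intros Hx. apply is_derive_Reals. apply derivable_pt_lim_ln. exact Hx. Qed.

Lemma Sm_inv_id : Sm (fun v => / v).
Proof.
  intros n. apply Dn_inv. apply P0_open.
  - intros x _ j _. apply (ex_derive_n_ext (fun z => z ^ 1)). intros; simpl; ring. apply ex_derive_n_pow.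
  - unfold P0; intros; lra.
Qed.

Lemma Sm_ln : Sm ln.
Proof.
  intros n. induction n as [|n IH].
  - intros x _ j Hj. replace j with 0%nat by lia. exact I.
  - apply Dn_S. split.
    + intros x Hx. exists (/ x). apply ln_der. exact Hx.
    + apply Dn_ext with (fun v => / v). apply P0_open.
      * intros x Hx. symmetry. apply is_derive_unique. apply ln_der. exact Hx.
      * apply Sm_inv_id.
Qed.

Lemma Sm_pow f k : Sm f -> Sm (fun v => f v ^ k).
Proof.
  intros Hf. induction k as [|k IH].
  - exact (Sm_const 1).
  - refine (Sm_ext (fun v => f v * f v ^ k) _ _ _).
    + intros v _. reflexivity.
    + apply Sm_mult; auto.
Qed.

Lemma Sm_fold (F : nat -> R -> R) (s : list nat) : (forall i, Sm (F i)) ->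
  Sm (fun v => fold_right Rplus 0 (map (fun i => F i v) s)).
Proof.
  intros HF. induction s as [|i s IH]; simpl. exact (Sm_const 0). apply Sm_plus; auto.
Qed.

Lemma Sm_sumR (F : nat -> R -> R) a b : (forall i, Sm (F i)) -> Sm (fun v => sumR a b (fun i => F i v)).
Proof. intros; apply Sm_fold; auto. Qed.

Lemma Derive_n_Sm_plus f g n u : Sm f -> Sm g -> 0 < u ->
  Derive_n (fun v => f v + g v) n u = Derive_n f n u + Derive_n g n u.
Proof.
  intros Hf Hg Hu. apply Derive_n_plus; apply Dn_loc with P0; auto; apply P0_open.
Qed.

Lemma Derive_n_fold (F : nat -> R -> R) (s : list nat) n u : (forall i, Sm (F i)) -> 0 < u ->
  Derive_n (fun v => fold_right Rplus 0 (map (fun i => F i v) s)) n u =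
  fold_right Rplus 0 (map (fun i => Derive_n (F i) n u) s).
Proof.
  intros HF Hu. induction s as [|i s IH]; simpl.
  - destruct n. reflexivity. apply Derive_n_const.
  - rewrite Derive_n_Sm_plus; auto. rewrite IH. reflexivity. apply Sm_fold; auto.
Qed.

Lemma Derive_n_sumR (F : nat -> R -> R) a b n u : (forall i, Sm (F i)) -> 0 < u ->
  Derive_n (fun v => sumR a b (fun i => F i v)) n u = sumR a b (fun i => Derive_n (F i) n u).
Proof. intros; apply Derive_n_fold; auto. Qed.

Definition coef (l k m r : nat) : R :=
  (-1) ^ r * Gamma (INR k + 1) / (INR (fact m) * INR (fact (l - m - r))).

Lemma Gamma_step k : (1 <= k)%nat -> Gamma (INR k + 1) = INR k * Gamma (INR (k - 1) + 1).
Proof.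
  intros Hk. replace (INR (k - 1) + 1) with (INR k) by (rewrite minus_INR by lia; simpl; ring).
  rewrite Gamma_GI. apply GI_rec. apply lt_0_INR. lia.
Qed.

Lemma coef_step l k m r : (1 <= k)%nat -> coef l k m r = INR k * coef l (k - 1) m r.
Proof. intros Hk. unfold coef. rewrite Gamma_step by auto. unfold Rdiv. ring. Qed.

Lemma falling_S x n : falling x (S n) = x * falling (x - 1) n.
Proof.
  induction n as [|n IH]. simpl. ring.
  change (falling x (S (S n))) with (falling x (S n) * (x - INR (S n))).
  rewrite IH. simpl falling. rewrite S_INR. ring.
Qed.

Lemma is_derive_fold (F dF : nat -> R -> R) (s : list nat) v :
  (forall i, In i s -> is_derive (F i) v (dF i v)) ->
  is_derive (fun w => fold_right Rplus 0 (map (fun i => F i w) s)) v (fold_right Rplus 0 (map (fun i => dF i v) s)).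
Proof.
  induction s as [|i s IH]; intros H; simpl.
  - apply (is_derive_const 0).
  - apply (is_derive_plus (F i)). apply H; simpl; auto. apply IH. intros; apply H; simpl; auto.
Qed.

Lemma is_derive_sumR (F dF : nat -> R -> R) a b v :
  (forall i, (a <= i <= b)%nat -> is_derive (F i) v (dF i v)) ->
  is_derive (fun w => sumR a b (fun i => F i w)) v (sumR a b (fun i => dF i v)).
Proof.
  intros H. apply is_derive_fold. intros i Hi. apply in_seq in Hi. apply H. lia.
Qed.

Lemma sum_identity N (al L : R) (c d : nat -> R) :
  (forall r, d r = al * c r - match r with O => 0 | S r' => c r' end) ->
  sumR 0 N (fun r => (-1) ^ r / INR (fact (N - r)) * d r * L ^ (N - r)) =
  sumR 0 N (fun r => (-1) ^ r / INR (fact (N - r)) * c r * (al * L ^ (N - r) + INR (N - r) * L ^ (pred (N - r)))).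
Proof.
  intros Hd.
  rewrite (sumR_ext 0 N _ (fun r => (-1) ^ r / INR (fact (N - r)) * c r * (al * L ^ (N - r)) +
     (-1) * ((-1) ^ r / INR (fact (N - r)) * match r with O => 0 | S r' => c r' end * L ^ (N - r)))).
  2:{ intros r _. rewrite Hd. ring. }
  rewrite (sumR_ext 0 N (fun r => (-1) ^ r / INR (fact (N - r)) * c r * (al * L ^ (N - r) + INR (N - r) * L ^ (pred (N - r)))) 
     (fun r => (-1) ^ r / INR (fact (N - r)) * c r * (al * L ^ (N - r)) +
     ((-1) ^ r / INR (fact (N - r)) * c r * (INR (N - r) * L ^ (pred (N - r)))))).
  2:{ intros r _. ring. }
  rewrite !sumR_plus, sumR_scal. f_equal.
  destruct N as [|N].
  - unfold sumR. simpl. field.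
  - set (Y := fun r => (-1) ^ r / INR (fact (S N - r)) * match r with O => 0 | S r' => c r' end * L ^ (S N - r)).
    set (Z := fun r => (-1) ^ r / INR (fact (S N - r)) * c r * (INR (S N - r) * L ^ pred (S N - r))).
    assert (E1 : sumR 0 (S N) Y = sumR 0 N (fun r => Y (S r))).
    { rewrite sumR_first by lia. rewrite sumR_shift. unfold Y at 1. simpl. ring. }
    assert (E2 : sumR 0 (S N) Z = sumR 0 N Z).
    { rewrite sumR_last by lia. unfold Z at 2. replace (S N - S N)%nat with 0%nat by lia. simpl. ring. }
    rewrite E1, E2. rewrite <- sumR_scal. apply sumR_ext. intros r Hr. unfold Y, Z.
    replace (S N - S r)%nat with (N - r)%nat by lia.
    replace (S N - r)%nat with (S (N - r)) by lia. simpl pred.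
    pose proof (INR_fact_neq_0 (N - r)).
    replace (INR (fact (S (N - r)))) with (INR (S (N - r)) * INR (fact (N - r))) by (rewrite <- mult_INR; reflexivity).
    assert (INR (S (N - r)) <> 0) by (apply not_0_INR; lia).
    simpl pow. field. split; auto.
Qed.

Definition Aterm (l k m n : nat) (v : R) : R :=
  sumR 0 (l - m) (fun r => coef l k m r * Ecoef n m * Ccoef r (k - n) * v ^ (k - n) * ln v ^ (l - m - r)).

Definition Bterm (l k m : nat) (v : R) : R :=
  sumR 0 (l - m) (fun r => coef l k m r * Ecoef k m * Ccoef r 0 * Derive (fun w => ln w ^ (l - m - r)) v).

Lemma Ktilde_A l v k : Ktilde l v k = sumR 0 l (fun m => sumR m k (fun n => Aterm l k m n v)).
Proof. reflexivity. Qed.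

Lemma term_deriv K a b v : 0 < v ->
  is_derive (fun w => K * w ^ (S a) * ln w ^ b) v (K * (INR (S a) * v ^ a * ln v ^ b + INR b * v ^ a * ln v ^ (pred b))).
Proof.
  intros Hv. auto_derive. auto. simpl pred. simpl. field. lra.
Qed.

Lemma A_deriv l k m n v : (n < k)%nat -> 0 < v ->
  is_derive (Aterm l k m n) v (INR k * Aterm l (k - 1) m n v).
Proof.
  intros Hnk Hv. unfold Aterm.
  destruct (k - n)%nat as [|a] eqn:Ea. lia.
  replace (k - 1 - n)%nat with a by lia.
  set (N := (l - m)%nat).
  set (D := fun r => (coef l k m r * Ecoef n m * Ccoef r (S a)) * (INR (S a) * v ^ a * ln v ^ (N - r) + INR (N - r) * v ^ a * ln v ^ (pred (N - r)))).
  enough (Eq : sumR 0 N D = INR k * sumR 0 N (fun r => coef l (k - 1) m r * Ecoef n m * Ccoef r a * v ^ a * ln v ^ (N - r))).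
  { rewrite <- Eq. unfold D.
    apply (is_derive_sumR (fun r w => (coef l k m r * Ecoef n m * Ccoef r (S a)) * w ^ S a * ln w ^ (N - r))
      (fun r w => (coef l k m r * Ecoef n m * Ccoef r (S a)) * (INR (S a) * w ^ a * ln w ^ (N - r) + INR (N - r) * w ^ a * ln w ^ (pred (N - r))))).
    intros r _. apply term_deriv; auto. }
  assert (Hk : (1 <= k)%nat) by lia.
  set (W := Gamma (INR k + 1) / INR (fact m) * Ecoef n m * v ^ a).
  assert (Hc : forall r, coef l k m r = (-1) ^ r / INR (fact (N - r)) * (Gamma (INR k + 1) / INR (fact m))).
  { intros r. unfold coef. fold N. pose proof (INR_fact_neq_0 m). pose proof (INR_fact_neq_0 (N - r)). field. split; auto. }
  rewrite <- sumR_scal.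
  transitivity (W * sumR 0 N (fun r => (-1) ^ r / INR (fact (N - r)) * Ccoef r (S a) * (INR (S a) * ln v ^ (N - r) + INR (N - r) * ln v ^ (pred (N - r))))).
  { rewrite <- sumR_scal. apply sumR_ext. intros r _. unfold D, W. rewrite Hc. ring. }
  rewrite <- (sum_identity N (INR (S a)) (ln v) (fun r => Ccoef r (S a)) (fun r => Ccoef r a)).
  2:{ intros r. apply Ccoef_rec. }
  rewrite <- sumR_scal. apply sumR_ext. intros r _.
  transitivity (coef l k m r * Ecoef n m * Ccoef r a * v ^ a * ln v ^ (N - r)).
  - rewrite Hc. unfold W. ring.
  - rewrite (coef_step l k m r Hk). ring.
Qed.

Lemma Sm_lnpow b : Sm (fun w => ln w ^ b).
Proof. apply Sm_pow, Sm_ln. Qed.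

Lemma A_top l k m v : 0 < v -> is_derive (Aterm l k m k) v (Bterm l k m v).
Proof.
  intros Hv. unfold Aterm, Bterm. rewrite Nat.sub_diag.
  apply (is_derive_sumR (fun r w => coef l k m r * Ecoef k m * Ccoef r 0 * w ^ 0 * ln w ^ (l - m - r))
     (fun r w => coef l k m r * Ecoef k m * Ccoef r 0 * Derive (fun w => ln w ^ (l - m - r)) w)).
  intros r _.
  apply is_derive_ext with (fun w => (coef l k m r * Ecoef k m * Ccoef r 0) * (ln w ^ (l - m - r))).
  { intros t. simpl. ring. }
  apply (is_derive_scal (fun w => ln w ^ (l - m - r))). apply Derive_correct.
  apply Sm_ex_derive; auto. apply Sm_lnpow.
Qed.

Definition Tterm (l k : nat) (v : R) : R := sumR 0 l (fun m => Bterm l k m v).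

Lemma Bterm_zero l k m v : (k < m)%nat -> Bterm l k m v = 0.
Proof.
  intros H. unfold Bterm. apply sumR_zero. intros r _. rewrite Ecoef_zero by auto. ring.
Qed.

Lemma Kt_deriv l k v : (1 <= k)%nat -> 0 < v ->
  is_derive (fun w => Ktilde l w k) v (INR k * Ktilde l v (k - 1) + Tterm l k v).
Proof.
  intros Hk Hv.
  apply is_derive_ext with (fun w => sumR 0 l (fun m => sumR m k (fun n => Aterm l k m n w))).
  { intros t. reflexivity. }
  set (dA := fun m n (w : R) => if Compare_dec.lt_dec n k then INR k * Aterm l (k - 1) m n w else Bterm l k m w).
  replace (INR k * Ktilde l v (k - 1) + Tterm l k v) with (sumR 0 l (fun m => sumR m k (fun n => dA m n v))).
  - apply (is_derive_sumR (fun m w => sumR m k (fun n => Aterm l k m n w)) (fun m w => sumR m k (fun n => dA m n w))).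
    intros m _. apply (is_derive_sumR (fun n w => Aterm l k m n w) (fun n w => dA m n w)).
    intros n Hn. unfold dA. destruct (Compare_dec.lt_dec n k) as [Hnk|Hnk].
    + apply A_deriv; auto.
    + replace n with k by lia. apply A_top; auto.
  - rewrite Ktilde_A. unfold Tterm. rewrite <- sumR_scal, <- sumR_plus. apply sumR_ext. intros m _.
    destruct (Compare_dec.le_lt_dec m k) as [Hmk|Hmk].
    + destruct k as [|k']. lia. rewrite sumR_last by lia.
      unfold dA at 2. destruct (Compare_dec.lt_dec (S k') (S k')) as [H|H]. lia.
      replace (S k' - 1)%nat with k' by lia. rewrite <- sumR_scal. f_equal.
      apply sumR_ext. intros n Hn. unfold dA. destruct (Compare_dec.lt_dec n (S k')). replace (S k' - 1)%nat with k' by lia. reflexivity. lia.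
    + rewrite !sumR_nil by lia. rewrite Bterm_zero by auto. ring.
Qed.

Lemma Sm_term K a b : Sm (fun v => K * v ^ a * ln v ^ b).
Proof.
  exact (Sm_mult (fun v => K * v ^ a) (fun v => ln v ^ b)
           (Sm_mult (fun _ => K) (fun v => v ^ a) (Sm_const K) (Sm_powv a)) (Sm_lnpow b)).
Qed.

Lemma Sm_Aterm l k m n : Sm (Aterm l k m n).
Proof.
  unfold Aterm. apply (Sm_sumR (fun r v => coef l k m r * Ecoef n m * Ccoef r (k - n) * v ^ (k - n) * ln v ^ (l - m - r))).
  intros r. apply Sm_term.
Qed.

Lemma Sm_Ktilde l k : Sm (fun v => Ktilde l v k).
Proof.
  apply (Sm_ext (fun v => sumR 0 l (fun m => sumR m k (fun n => Aterm l k m n v)))).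
  intros; reflexivity.
  apply (Sm_sumR (fun m v => sumR m k (fun n => Aterm l k m n v))). intros m.
  apply (Sm_sumR (fun n v => Aterm l k m n v)). intros n. apply Sm_Aterm.
Qed.

Lemma Sm_Bterm l k m : Sm (Bterm l k m).
Proof.
  unfold Bterm. apply (Sm_sumR (fun r v => coef l k m r * Ecoef k m * Ccoef r 0 * Derive (fun w => ln w ^ (l - m - r)) v)).
  intros r. exact (Sm_mult (fun _ => coef l k m r * Ecoef k m * Ccoef r 0) (Derive (fun w => ln w ^ (l - m - r)))
     (Sm_const _) (Sm_Derive _ (Sm_lnpow _))).
Qed.

Lemma Sm_Tterm l k : Sm (Tterm l k).
Proof. unfold Tterm. apply (Sm_sumR (fun m v => Bterm l k m v)). intros; apply Sm_Bterm. Qed.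

Lemma Derive_n_Tterm l k n u : 0 < u ->
  Derive_n (Tterm l k) n u = sumR 0 l (fun m => sumR 0 (l - m) (fun r =>
     coef l k m r * Ecoef k m * Ccoef r 0 * Derive_n (fun v => ln v ^ (l - m - r)) (S n) u)).
Proof.
  intros Hu. unfold Tterm.
  rewrite (Derive_n_sumR (fun m v => Bterm l k m v)) by (auto; intros; apply Sm_Bterm).
  apply sumR_ext. intros m _. unfold Bterm.
  rewrite (Derive_n_sumR (fun r v => coef l k m r * Ecoef k m * Ccoef r 0 * Derive (fun w => ln w ^ (l - m - r)) v)).
  - apply sumR_ext. intros r _. rewrite Derive_n_scal_l. rewrite Derive_n_S'. reflexivity.
  - intros r. exact (Sm_mult (fun _ => coef l k m r * Ecoef k m * Ccoef r 0) (Derive (fun w => ln w ^ (l - m - r)))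
     (Sm_const _) (Sm_Derive _ (Sm_lnpow _))).
  - auto.
Qed.

Lemma falling_1 x : falling x 1 = x.
Proof. simpl. ring. Qed.

Lemma sumR_single a f : sumR a a f = f a.
Proof. unfold sumR. replace (S a - a)%nat with 1%nat by lia. simpl. ring. Qed.

Lemma Derive_n_1 f u : Derive_n f 1 u = Derive f u.
Proof. reflexivity. Qed.

Lemma sumR_split0 n f : sumR 0 (S n) f = f 0%nat + sumR 0 n (fun j => f (S j)).
Proof. rewrite sumR_first by lia. rewrite sumR_shift. reflexivity. Qed.

Definition RHSsum (l k nu : nat) (u : R) : R :=
  sumR 0 (nu - 1) (fun j => sumR 0 l (fun m => sumR 0 (l - m) (fun r =>
    coef l k m r * Ecoef (k - j) m * Ccoef r 0 * Derive_n (fun v => ln v ^ (l - m - r)) (nu - j) u))).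

Lemma main_gen l nu : forall k, (1 <= nu)%nat -> (nu <= k)%nat -> forall u, 0 < u ->
  Derive_n (fun v => Ktilde l v k) nu u = falling (INR k) nu * Ktilde l u (k - nu) + RHSsum l k nu u.
Proof.
  induction nu as [|nu IH]; intros k H1 H2 u Hu. lia.
  destruct nu as [|n'].
  - rewrite Derive_n_1. transitivity (INR k * Ktilde l u (k - 1) + Tterm l k u).
    { apply is_derive_unique, Kt_deriv; auto. }
    rewrite falling_1. unfold RHSsum. simpl minus. rewrite sumR_single. f_equal.
    unfold Tterm. apply sumR_ext. intros m _. unfold Bterm. apply sumR_ext. intros r _.
    rewrite Nat.sub_0_r. reflexivity.
  - rewrite Derive_n_S'.
    rewrite (Derive_n_ext_loc _ (fun v => INR k * Ktilde l v (k - 1) + Tterm l k v)).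
    2:{ destruct (P0_open u Hu) as [e He]. exists e. intros y Hy.
        apply is_derive_unique, Kt_deriv. lia. apply He, Hy. }
    rewrite Derive_n_Sm_plus; auto.
    2:{ apply Sm_scal, Sm_Ktilde. }
    2:{ apply Sm_Tterm. }
    rewrite Derive_n_scal_l. rewrite IH by (first [lra | lia]). rewrite Derive_n_Tterm by auto.
    assert (F1 : falling (INR k) (S (S n')) = INR k * falling (INR (k - 1)) (S n')).
    { rewrite falling_S. f_equal. rewrite minus_INR by lia. reflexivity. }
    assert (F2 : (k - S (S n'))%nat = (k - 1 - S n')%nat) by lia.
    assert (F3 : RHSsum l k (S (S n')) u =
      sumR 0 l (fun m => sumR 0 (l - m) (fun r => coef l k m r * Ecoef k m * Ccoef r 0 * Derive_n (fun v => ln v ^ (l - m - r)) (S (S n')) u))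
      + INR k * RHSsum l (k - 1) (S n') u).
    { unfold RHSsum. replace (S (S n') - 1)%nat with (S n') by lia. replace (S n' - 1)%nat with n' by lia.
      rewrite (sumR_split0 n'). f_equal.
      - rewrite !Nat.sub_0_r. reflexivity.
      - rewrite <- sumR_scal. apply sumR_ext. intros j Hj. rewrite <- sumR_scal. apply sumR_ext. intros m _.
        rewrite <- sumR_scal. apply sumR_ext. intros r _. rewrite (coef_step l k m r) by lia.
        replace (k - 1 - j)%nat with (k - S j)%nat by lia. replace (S (S n') - S j)%nat with (S n' - j)%nat by lia. ring. }
    rewrite F1, F2, F3. ring.
Qed.

Theorem lemma4 (l kappa : nat) (hl : (1 <= l)%nat) (hk : (1 <= kappa)%nat)
  (nu : nat) (hnu1 : (1 <= nu)%nat) (hnu2 : (nu <= kappa)%nat)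
  (u : R) (hu : 1 < u) :
  Derive_n (fun v => Ktilde l v kappa) nu u =
  falling (INR kappa) nu * Ktilde l u (kappa - nu)
  + sumR 0 (nu - 1) (fun j =>
    sumR 0 l (fun m =>
    sumR 0 (l - m) (fun r =>
      (-1) ^ r * Gamma (INR kappa + 1) / (INR (fact m) * INR (fact (l - m - r)))
      * Ecoef (kappa - j) m * Ccoef r 0
      * Derive_n (fun v => ln v ^ (l - m - r)) (nu - j) u))).
Proof.
  exact (main_gen l nu kappa hnu1 hnu2 u ltac:(lra)).
Qed.
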